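(* Let $p\ge2$ and let $n\ge1$ be a natural number whose tribonacci Zeckendorf representation is $[n]=\varepsilon_p\varepsilon_{p-1}\cdots\varepsilon_2$ with $\varepsilon_p=1$. Then for every word $u\in(\tau^{p-1}(c))^{\varepsilon_p}(\tau^{p-2}(c))^{\varepsilon_{p-1}}\cdots(\tau(c))^{\varepsilon_2}$, at least one of the words in $u\,\mathcal{S}_\tau$ is a prefix of some word in $\tau^p(a)$, where $\mathcal{S}_\tau=\{ab,ba,ac,ca\}$.
   Context: Tribonacci numbers: $t_0=0$, $t_1=t_2=1$, $t_n=t_{n-1}+t_{n-2}+t_{n-3}$ for $n\ge3$. Every positive integer $n$ has a unique representation $n=\sum_{i=2}^r\varepsilon_it_i$ with $\varepsilon_i\in\{0,1\}$, $\varepsilon_r=1$ and $\varepsilon_i\varepsilon_{i+1}\varepsilon_{i+2}=0$; write $[n]=\varepsilon_r\cdots\varepsilon_2$. The random tribonacci substitution is $\tau\colon a\mapsto\{ab,ba\},\ b\mapsto\{ac,ca\},\ c\mapsto\{a\}$, extended to words by set concatenation and to sets by unions; $\tau^p$ is its $p$-fold iterate. For a set $A$ of words, $A^0=\{\text{empty word}\}$, $A^k$ the $k$-fold set concatenation. Note all words in $\tau^{i-1}(c)$ have length $t_i$. *)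

(* Defs.v *)
From mathcomp Require Import all_boot.
Set Implicit Arguments. Unset Strict Implicit. Unset Printing Implicit Defensive.

Fixpoint trib (n : nat) : nat :=
  match n with
  | 0 => 0
  | m.+1 =>
      match m with
      | 0 => 1
      | l.+1 =>
          match l with
          | 0 => 1
          | k.+1 => trib m + trib l + trib k
          end
      end
  end.

Inductive letter := la | lb | lc.
Definition word := seq letter.

Definition wset := word -> Prop.

Definition tau_letter (x : letter) : wset :=
  match x with
  | la => fun w => w = [:: la; lb] \/ w = [:: lb; la]
  | lb => fun w => w = [:: la; lc] \/ w = [:: lc; la]
  | lc => fun w => w = [:: la]
  end.

Definition cat_set (A B : wset) : wset :=
  fun w => exists u v, w = u ++ v /\ A u /\ B v.

Fixpoint tau_word (u : word) : wset :=
  match u with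
  | [::] => fun w => w = [::]
  | x :: u' => cat_set (tau_letter x) (tau_word u')
  end.

Definition tau_set (A : wset) : wset :=
  fun w => exists u, A u /\ tau_word u w.

Definition tau_iter (p : nat) (A : wset) : wset := iter p tau_set A.

Definition tau_pow (p : nat) (x : letter) : wset := tau_iter p (fun w => w = [:: x]).

Fixpoint pow_set (A : wset) (k : nat) : wset :=
  match k with
  | 0 => fun w => w = [::]
  | k'.+1 => cat_set A (pow_set A k')
  end.

(* zeck_prod eps i =
   (tau^{i-1}(c))^{eps_i} (tau^{i-2}(c))^{eps_{i-1}} ... (tau(c))^{eps_2}
   (empty product {empty word} for i < 2). *)
Fixpoint zeck_prod (eps : nat -> bool) (i : nat) : wset :=
  match i with
  | 0 => fun w => w = [::]
  | j.+1 =>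
      match j with
      | 0 => fun w => w = [::]
      | _ => cat_set (pow_set (tau_pow j lc) (eps j.+1)) (zeck_prod eps j)
      end
  end.

Definition is_trib_zeck (n p : nat) (eps : nat -> bool) : Prop :=
  eps p = true /\
  (forall i, 2 <= i -> i.+2 <= p -> ~~ [&& eps i, eps i.+1 & eps i.+2]) /\
  n = \sum_(2 <= i < p.+1) (eps i : nat) * trib i.

Definition S_tau : wset :=
  fun s => s = [:: la; lb] \/ s = [:: lb; la] \/ s = [:: la; lc] \/ s = [:: lc; la].

Definition is_prefix (u w : word) : Prop := exists v, w = u ++ v.

(* Main.v *)
Require Import Defs.
From mathcomp Require Import all_boot.
From mathcomp Require Import zify.

Lemma tw_cat u v w1 w2 : tau_word u w1 -> tau_word v w2 -> tau_word (u ++ v) (w1 ++ w2).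
Proof.
elim: u w1 => [|x u IH] w1 /=; first by move=> ->.
move=> [a [b [-> [Ha Hb]]]] Hv; exists a, (b ++ w2); split; first by rewrite catA.
split => //; exact: IH.
Qed.

Lemma iter_cat k (A B : wset) w1 w2 : iter k tau_set A w1 -> iter k tau_set B w2 ->
  iter k tau_set (cat_set A B) (w1 ++ w2).
Proof.
elim: k w1 w2 => [|k IH] w1 w2 /=; first by move=> H1 H2; exists w1, w2.
move=> [u1 [H1 T1]] [u2 [H2 T2]]; exists (u1 ++ u2); split; first exact: IH.
exact: tw_cat.
Qed.

Lemma iter_mono k (A B : wset) : (forall w, A w -> B w) ->
  forall w, iter k tau_set A w -> iter k tau_set B w.
Proof.
move=> HAB; elim: k => [|k IH] w /=; first exact: HAB.
move=> [u [Hu T]]; exists u; split => //; exact: IH.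
Qed.

Lemma pow_step k x y z w1 w2 : tau_letter x [:: y; z] -> tau_pow k y w1 ->
  tau_pow k z w2 -> tau_pow k.+1 x (w1 ++ w2).
Proof.
rewrite /tau_pow /tau_iter iterSr => Hx H1 H2.
apply: (@iter_mono k (cat_set (fun w => w = [:: y]) (fun w => w = [:: z]))); last exact: iter_cat.
move=> w [u [v [-> [-> ->]]]]; exists [:: x]; split => //=.
by exists [:: y; z], [::].
Qed.

Lemma C_A k w : tau_pow k.+1 lc w <-> tau_pow k la w.
Proof.
rewrite /tau_pow /tau_iter iterSr; split; apply: iter_mono => w'.
- by move=> [u [-> [a [b [-> [Ha Hb]]]]]]; rewrite /= in Ha Hb; subst.
- by move=> ->; exists [:: lc]; split => //; exists [:: la], [::].
Qed.

Lemma A1_inv w : tau_pow 1 la w -> w = [:: la; lb] \/ w = [:: lb; la].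
Proof. by move=> [u [-> [a [b [-> [[->|->] ->]]]]]]; [left|right]. Qed.

Lemma C1_inv w : tau_pow 1 lc w -> w = [:: la].
Proof. by move/C_A. Qed.

Lemma C2_inv w : tau_pow 2 lc w -> w = [:: la; lb] \/ w = [:: lb; la].
Proof. by move/C_A/A1_inv. Qed.

Lemma pow_bool (X : wset) (b : bool) w : pow_set X b w -> (b = false /\ w = [::]) \/ (b = true /\ X w).
Proof.
case: b => /=; last by left.
by move=> [x [y [-> [Hx ->]]]]; right; rewrite cats0.
Qed.

Lemma exABC k : (exists v, tau_pow k la (la :: v)) /\ (exists w, tau_pow k lb w) /\ (exists w, tau_pow k lc w).
Proof.
elim: k => [|k [[v Ha] [[wb Hb] [wc Hc]]]]; first by split; [exists [::]|split; [exists [:: lb]|exists [:: lc]]].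
split; first by exists (v ++ wb); apply: (@pow_step k la la lb (la :: v)) => //; left.
split; first by exists ((la :: v) ++ wc); apply: (@pow_step k lb la lc (la :: v) wc) => //; left.
by exists (la :: v); apply/C_A.
Qed.

Lemma exAb k : exists v, tau_pow k.+1 la (lb :: v).
Proof.
elim: k => [|k [v Hv]].
  by exists [:: la]; apply: (@pow_step 0 la lb la [:: lb] [:: la]) => //; right.
have [_ [[wb Hb] _]] := exABC k.+1.
by exists (v ++ wb); apply: (@pow_step k.+1 la la lb (lb :: v)) => //; left.
Qed.

Lemma exBa k : exists v, tau_pow k.+1 lb (la :: v).
Proof.
have [[v Ha] [_ [wc Hc]]] := exABC k.
by exists (v ++ wc); apply: (@pow_step k lb la lc (la :: v)) => //; left.
Qed.

Lemma exBn k : exists l v, l <> la /\ tau_pow k.+1 lb (l :: v).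
Proof.
case: k => [|k].
  exists lc, [:: la]; split => //.
  by apply: (@pow_step 0 lb lc la [:: lc] [:: la]) => //; right.
have [v Hv] := exAb k.
have [_ [_ [wc Hc]]] := exABC k.+1.
exists lb, (v ++ wc); split => //.
by apply: (@pow_step k.+1 lb la lc (lb :: v)) => //; left.
Qed.

Definition rgood (r : word) := (exists s t, S_tau s /\ r = s ++ t) \/ (exists l, r = [:: l]).

Lemma follow (F : wset) r : rgood r -> (exists v, F (la :: v)) ->
  (exists l v, l <> la /\ F (l :: v)) ->
  exists y, F y /\ exists s t, S_tau s /\ r ++ y = s ++ t.
Proof.
move=> [[s [t [Hs ->]]] | [l ->]] [va Ha] [l' [vb [Hl Hb]]].
  by exists (la :: va); split => //; exists s, (t ++ la :: va); rewrite catA.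
case: l.
- exists (l' :: vb); split => //; exists [:: la; l'], vb; split => //.
  case: l' Hl {Hb} => // _; rewrite /S_tau; tauto.
- by exists (la :: va); split => //; exists [:: lb; la], va; split => //; rewrite /S_tau; tauto.
- by exists (la :: va); split => //; exists [:: lc; la], va; split => //; rewrite /S_tau; tauto.
Qed.

Definition no111 (eps : nat -> bool) q :=
  forall i, 2 <= i -> i.+2 <= q -> ~~ [&& eps i, eps i.+1 & eps i.+2].

Lemma A1ab : tau_pow 1 la [:: la; lb].
Proof. by apply: (@pow_step 0 la la lb [:: la] [:: lb]) => //; left. Qed.
Lemma A1ba : tau_pow 1 la [:: lb; la].
Proof. by apply: (@pow_step 0 la lb la [:: lb] [:: la]) => //; right. Qed.
Lemma B1ac : tau_pow 1 lb [:: la; lc].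
Proof. by apply: (@pow_step 0 lb la lc [:: la] [:: lc]) => //; left. Qed.

Lemma Rk k : forall eps, no111 eps k.+1 -> forall u, zeck_prod eps k.+1 u ->
  exists W r, tau_pow k la W /\ W = u ++ r /\ rgood r.
Proof.
elim/ltn_ind: k => k IH eps H3 u.
case: k IH H3 => [|[|[|m]]] IH H3.
- move=> -> /=; exists [:: la], [:: la]; split => //; split => //; right; by exists la.
- move=> [x [y [-> [Hx ->]]]]; exists [:: la; lb]; rewrite cats0.
  case/pow_bool: Hx => [[_ ->]|[_ /C1_inv ->]].
  + exists [:: la; lb]; split; first exact: A1ab; split => //; left.
    by exists [:: la; lb], [::]; split => //; left.
  + exists [:: lb]; split; first exact: A1ab; split => //; right; by exists lb.
- move=> [x [y' [-> [Hx [y [z [-> [Hy ->]]]]]]]]; rewrite cats0.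
  have W1 : tau_pow 2 la ([:: la; lb] ++ [:: la; lc]).
    by apply: (@pow_step 1 la la lb) => //; [left|exact: A1ab|exact: B1ac].
  have W2 : tau_pow 2 la ([:: lb; la] ++ [:: la; lc]).
    by apply: (@pow_step 1 la la lb) => //; [left|exact: A1ba|exact: B1ac].
  have SS : forall s, S_tau s -> rgood (s ++ [::]) by move=> s Hs; left; exists s, [::].
  case/pow_bool: Hx => [[_ ->]|[_ /C2_inv [->| ->]]];
  case/pow_bool: Hy => [[_ ->]|[_ /C1_inv ->]].
  + exists (la :: lb :: la :: lc :: nil), (la :: lb :: la :: lc :: nil); split => //; split => //.
    by left; exists [:: la; lb], [:: la; lc]; split => //; left.
  + exists (la :: lb :: la :: lc :: nil), (lb :: la :: lc :: nil); split => //; split => //.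
    by left; exists [:: lb; la], [:: lc]; split => //; right; left.
  + exists (la :: lb :: la :: lc :: nil), (la :: lc :: nil); split => //; split => //.
    by left; exists [:: la; lc], [::]; split => //; right; right; left.
  + exists (la :: lb :: la :: lc :: nil), (lc :: nil); split => //; split => //.
    by right; exists lc.
  + exists (lb :: la :: la :: lc :: nil), (la :: lc :: nil); split => //; split => //.
    by left; exists [:: la; lc], [::]; split => //; right; right; left.
  + exists (lb :: la :: la :: lc :: nil), (lc :: nil); split => //; split => //.
    by right; exists lc.
-
  move=> [x [u1 [-> [Hx Hu1]]]].
  have Hn : forall q, q <= m.+3 -> no111 eps q.
    by move=> q Hq i Hi Hi2; apply: H3 => //; lia.
  case/pow_bool: Hx => [[Ee ->]|[Ee Hx]].
  +
    have [W' [r' [HW' [EW Hr']]]] := IH m.+2 ltac:(lia) eps (Hn m.+3 ltac:(lia)) u1 Hu1.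
    rewrite EW in HW'.
    have [y [Hy [s [t [Hs Ht]]]]] := @follow (tau_pow m.+2 lb) _ Hr' (exBa m.+1) (exBn m.+1).
    exists ((u1 ++ r') ++ y), (r' ++ y); split.
      by apply: (@pow_step m.+2 la la lb) => //; left.
    split; first by rewrite catA.
    by left; exists s, t.
  + move: Hu1 => [x2 [u2 [-> [Hx2 Hu2]]]].
    have HxA : tau_pow m.+2 la x by apply/C_A.
    case/pow_bool: Hx2 => [[Ee2 ->]|[Ee2 Hx2]].
    *
      clear Hx; case: m IH H3 Hn HxA Hu2 Ee Ee2 => [|m] IH H3 Hn HxA Hu2 Ee Ee2.
      -
        move: Hu2 => [x3 [u3 [-> [Hx3 ->]]]]; rewrite cats0.
        have Hb : tau_pow 2 lb ([:: la; lb] ++ [:: la]).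
          by apply: (@pow_step 1 lb la lc); [left|exact: A1ab|apply/C_A].
        case/pow_bool: Hx3 => [[_ ->]|[_ /C1_inv ->]].
        + exists (x ++ [:: la; lb; la]), [:: la; lb; la]; split.
            by apply: (@pow_step 2 la la lb) => //; left.
          split; first by rewrite /= cats0.
          by left; exists [:: la; lb], [:: la]; split => //; left.
        + exists (x ++ [:: la; lb; la]), [:: lb; la]; split.
            by apply: (@pow_step 2 la la lb) => //; left.
          split; first by rewrite /= -catA.
          by left; exists [:: lb; la], [::]; split => //; right; left.
      - have [W' [r' [HW' [EW Hr']]]] :=
          IH m.+2 ltac:(lia) eps (Hn m.+3 ltac:(lia)) u2 Hu2.
        rewrite EW in HW'.
        have Ha : exists v, tau_pow m.+2 lc (la :: v).
          by have [[v Hv] _] := exABC m.+1; exists v; apply/C_A.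
        have Hnb : exists l v, l <> la /\ tau_pow m.+2 lc (l :: v).
          by have [v Hv] := exAb m; exists lb, v; split => //; apply/C_A.
        have [y [Hy [s [t [Hs Ht]]]]] := @follow (tau_pow m.+2 lc) _ Hr' Ha Hnb.
        exists (x ++ ((u2 ++ r') ++ y)), (r' ++ y); split.
          apply: (@pow_step m.+3 la la lb) => //; first by left.
          by apply: (@pow_step m.+2 lb la lc) => //; left.
        split; first by rewrite /= -!catA.
        by left; exists s, t.
    *
      move: Hu2 => [x3 [u3 [-> [Hx3 Hu3]]]].
      have Ee3 : eps m.+2 = false.
        have := H3 m.+2 isT (leqnn _); rewrite Ee Ee2.
        by case: (eps m.+2).
      case/pow_bool: Hx3 => [[_ ->]|[E4 _]]; last by rewrite Ee3 in E4.
      have [W' [r' [HW' [EW Hr']]]] :=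
        IH m ltac:(lia) eps (Hn m.+1 ltac:(lia)) u3 Hu3.
      rewrite EW in HW'.
      exists (x ++ (x2 ++ (u3 ++ r'))), r'; split.
        apply: (@pow_step m.+2 la la lb) => //; first by left.
        apply: (@pow_step m.+1 lb la lc) => //; first by left.
          by apply/C_A.
        by apply/C_A.
      by split => //; rewrite /= !catA.
Qed.

Theorem mainTheorem6 (p n : nat) (eps : nat -> bool) :
  2 <= p -> 1 <= n -> is_trib_zeck n p eps ->
  forall u : word, zeck_prod eps p u ->
  exists s : word, S_tau s /\
    exists w : word, tau_pow p la w /\ is_prefix (u ++ s) w.
Proof.
case: p => [|[|q]] // _ _ [_ [H3 _]] u Hu.
have [W [r [HW [EW Hr]]]] := @Rk q.+1 eps H3 u Hu.
have [y [Hy [s [t [Hs Ht]]]]] := @follow (tau_pow q.+1 lb) _ Hr (exBa q) (exBn q).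
exists s; split => //; exists (W ++ y); split.
  by apply: (@pow_step q.+1 la la lb) => //; left.
by exists t; rewrite EW -catA Ht catA.
Qed.
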